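(* Let $u\in[0,1]$, $s\geq 1$, and for $x\in(0,1)$ define $$f_{u,s}(x)=\frac{s}{2}\log(1-ux^2)-\log\left(\frac{\pi}{2\mathcal{K}(x)}\right).$$ Then $f_{u,s}(x)>0$ for all $x\in(0,1)$ if and only if $2su\leq 1$.
   Context: $\mathcal{K}(r)$ denotes the complete elliptic integral of the first kind: for $0<r<1$, $\mathcal{K}(r)=\int_0^{\pi/2}(1-r^2\sin^2\theta)^{-1/2}\,d\theta=\frac{\pi}{2}\,{}_2F_1(1/2,1/2;1;r^2)$. *)

(* Defs.v *)
From Stdlib Require Import Reals.
From Coquelicot Require Import Coquelicot.
Open Scope R_scope.

Definition ellipticK (r : R) : R :=
  RInt (fun t => / sqrt (1 - r ^ 2 * (sin t) ^ 2)) 0 (PI / 2).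

Definition f_us (u s x : R) : R :=
  s / 2 * ln (1 - u * x ^ 2) - ln (PI / (2 * ellipticK x)).

(* Main.v *)
Require Import Defs.
From Stdlib Require Import Reals Lra Psatz.
From Coquelicot Require Import Coquelicot.
Open Scope R_scope.

Lemma alg_lower (p q : R) : 0 < p <= 1 -> 0 < q <= 1 ->
  / q - (p^2 - q^2) / (2 * q ^ 3) + (p^2 - q^2)^2 / 8 <= / p.
Proof.
  intros [hp0 hp1] [hq0 hq1].
  assert (E : / p - (/ q - (p^2 - q^2) / (2 * q ^ 3) + (p^2 - q^2)^2 / 8)
     = (q - p)^2 * ((2*q + p) / (2 * p * q^3) - (p + q)^2 / 8)).
  { field. lra. }
  assert (0 <= (2*q + p) / (2 * p * q^3) - (p + q)^2 / 8).
  { assert (hpq : 0 < p * q^3) by (apply Rmult_lt_0_compat; [lra| apply pow_lt; lra]).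
    assert (h1 : 1 <= (2*q + p) / (2 * p * q^3)).
    { apply Rmult_le_reg_r with (2 * p * q ^ 3). lra.
      replace ((2*q + p) / (2 * p * q^3) * (2 * p * q ^ 3)) with (2*q+p) by (field; lra).
      assert (q^3 <= q) by (simpl; nra). nra. }
    assert ((p+q)^2 <= 4) by nra. lra. }
  assert (0 <= (q - p)^2) by apply pow2_ge_0.
  assert (0 <= (q - p)^2 * ((2*q + p) / (2 * p * q^3) - (p + q)^2 / 8)) by (apply Rmult_le_pos; auto).
  lra.
Qed.

Lemma alg_upper (p : R) : 1/2 <= p <= 1 ->
  / p <= 1 + (1 - p^2) / 2 + 2 * (1 - p^2)^2.
Proof.
  intros [hp0 hp1].
  assert (E : 1 + (1 - p^2) / 2 + 2 * (1 - p^2)^2 - / p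
     = (1 - p)^2 * (2 * (1 + p)^2 - (2 + p) / (2 * p))).
  { field. lra. }
  assert (0 <= 2 * (1 + p)^2 - (2 + p) / (2 * p)).
  { assert ((2 + p) / (2 * p) <= 5/2).
    { apply Rmult_le_reg_r with (2 * p). lra.
      replace ((2 + p) / (2 * p) * (2 * p)) with (2+p) by (field; lra). lra. }
    nra. }
  assert (0 <= (1 - p)^2) by apply pow2_ge_0.
  assert (0 <= (1 - p)^2 * (2 * (1 + p)^2 - (2 + p) / (2 * p))) by (apply Rmult_le_pos; auto).
  lra.
Qed.

Lemma g_ex_RInt (x : R) : 0 < x < 1 ->
  ex_RInt (fun t => / sqrt (1 - x ^ 2 * (sin t) ^ 2)) 0 (PI / 2).
Proof.
  intros hx. apply (@ex_RInt_continuous R_CompleteNormedModule). intros t _.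
  apply (@ex_derive_continuous R_AbsRing R_NormedModule).
  assert (h : 0 < 1 - x ^ 2 * sin t ^ 2).
  { pose proof (SIN_bound t). assert (h1 : 0 <= sin t ^ 2 <= 1) by (split; nra).
    assert (h2 : 0 < x ^ 2 < 1) by (destruct hx; split; [nra| ]; assert (x*x < x*1) by (apply Rmult_lt_compat_l; lra); simpl; lra).
    assert (x ^ 2 * sin t ^ 2 <= x ^ 2) by nra. lra. }
  auto_derive. split; [exact h|]. split; [|exact I].
  apply Rgt_not_eq. apply sqrt_lt_R0. exact h.
Qed.

Lemma lower_int (q z : R) : q <> 0 ->
  is_RInt (fun t => / q - z * cos (2 * t) / (4 * q ^ 3) + z ^ 2 * cos (2 * t) ^ 2 / 32)
    0 (PI / 2) (PI / (2 * q) + z ^ 2 * PI / 128).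
Proof.
  intros hq.
  set (F := fun t => t / q - z * sin (2 * t) / (8 * q ^ 3) + z ^ 2 / 32 * (t / 2 + sin (4 * t) / 8)).
  replace (PI / (2 * q) + z ^ 2 * PI / 128) with (minus (F (PI/2)) (F 0)).
  - apply (@is_RInt_derive R_CompleteNormedModule).
    + intros t _. unfold F. auto_derive; auto.
      replace (4 * t) with (2 * (2 * t)) by ring. rewrite (cos_2a_cos (2 * t)). field. auto.
    + intros y _. apply (@ex_derive_continuous R_AbsRing R_NormedModule). auto_derive; auto.
  - unfold F, minus, plus, opp; simpl.
    replace (2 * (PI / 2)) with PI by field. replace (4 * (PI / 2)) with (2 * PI) by field.
    rewrite sin_PI, sin_2PI, !Rmult_0_r, sin_0. field. auto.
Qed.

Lemma upper_int (z : R) :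
  is_RInt (fun t => 1 + z * sin t ^ 2 / 2 + 2 * z ^ 2)
    0 (PI / 2) (PI / 2 * (1 + z / 4 + 2 * z ^ 2)).
Proof.
  set (F := fun t => t * (1 + 2 * z ^ 2) + z / 2 * (t / 2 - sin (2 * t) / 4)).
  replace (PI / 2 * (1 + z / 4 + 2 * z ^ 2)) with (minus (F (PI/2)) (F 0)).
  - apply (@is_RInt_derive R_CompleteNormedModule).
    + intros t _. unfold F. auto_derive; auto.
      rewrite cos_2a_sin. field.
    + intros y _. apply (@ex_derive_continuous R_AbsRing R_NormedModule). auto_derive; auto.
  - unfold F, minus, plus, opp; simpl.
    replace (2 * (PI / 2)) with PI by field.
    rewrite sin_PI, !Rmult_0_r, sin_0. field.
Qed.

Lemma sin2_bound t : 0 <= sin t ^ 2 <= 1.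
Proof. pose proof (SIN_bound t) as [H1 H2]. split. apply pow2_ge_0.
assert (0 <= (1 - sin t) * (1 + sin t)) by (apply Rmult_le_pos; lra). nra. Qed.

Lemma K_lower (x : R) : 0 < x < 1 ->
  PI / (2 * sqrt (1 - x ^ 2 / 2)) < ellipticK x.
Proof.
  intros hx.
  assert (h2 : 0 < x ^ 2 < 1) by (destruct hx; split; [nra| ]; assert (x*x < x*1) by (apply Rmult_lt_compat_l; lra); simpl; lra).
  set (q := sqrt (1 - x ^ 2 / 2)).
  assert (hq2 : q ^ 2 = 1 - x ^ 2 / 2) by (apply pow2_sqrt; lra).
  assert (hq0 : 0 < q) by (apply sqrt_lt_R0; lra).
  assert (hq1 : q <= 1) by nra.
  pose proof (lower_int q (x^2) (Rgt_not_eq _ _ hq0)) as HL.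
  assert (Hle : RInt (fun t => / q - x^2 * cos (2 * t) / (4 * q ^ 3) + (x^2) ^ 2 * cos (2 * t) ^ 2 / 32) 0 (PI/2)
     <= ellipticK x).
  { unfold ellipticK. apply RInt_le.
    - pose proof PI_RGT_0. lra.
    - eexists; exact HL.
    - apply g_ex_RInt; exact hx.
    - intros t _.
      pose proof (sin2_bound t) as hs.
      set (p := sqrt (1 - x ^ 2 * sin t ^ 2)).
      assert (hp2 : p ^ 2 = 1 - x ^ 2 * sin t ^ 2) by (apply pow2_sqrt; nra).
      assert (hp0 : 0 < p) by (apply sqrt_lt_R0; nra).
      assert (hp1 : p <= 1) by nra.
      pose proof (alg_lower p q (conj hp0 hp1) (conj hq0 hq1)) as A.
      assert (hd : p ^ 2 - q ^ 2 = x ^ 2 * cos (2 * t) / 2).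
      { rewrite hp2, hq2, cos_2a_sin. field. }
      rewrite hd in A.
      replace (/ q - x ^ 2 * cos (2 * t) / (4 * q ^ 3) + (x ^ 2) ^ 2 * cos (2 * t) ^ 2 / 32)
        with (/ q - x ^ 2 * cos (2 * t) / 2 / (2 * q ^ 3) + (x ^ 2 * cos (2 * t) / 2) ^ 2 / 8)
        by (field; lra).
      exact A. }
  rewrite (is_RInt_unique _ _ _ _ HL) in Hle.
  assert (0 < (x ^ 2) ^ 2 * PI / 128).
  { pose proof PI_RGT_0. assert (0 < (x^2)^2) by (apply pow_lt; lra).
    assert (0 < (x^2)^2 * PI) by (apply Rmult_lt_0_compat; lra). lra. }
  lra.
Qed.

Lemma K_upper (x : R) : 0 < x -> x ^ 2 <= 3/4 ->
  ellipticK x <= PI / 2 * (1 + x ^ 2 / 4 + 2 * (x ^ 2) ^ 2).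
Proof.
  intros hx0 hx.
  assert (hx1 : x < 1) by nra.
  pose proof (upper_int (x^2)) as HU.
  rewrite <- (is_RInt_unique _ _ _ _ HU).
  unfold ellipticK. apply RInt_le.
  - pose proof PI_RGT_0. lra.
  - apply g_ex_RInt; lra.
  - eexists; exact HU.
  - intros t _.
    pose proof (sin2_bound t) as hs.
    set (p := sqrt (1 - x ^ 2 * sin t ^ 2)).
    assert (hp2 : p ^ 2 = 1 - x ^ 2 * sin t ^ 2) by (apply pow2_sqrt; nra).
    assert (hp0 : 0 <= p) by apply sqrt_pos.
    assert (hp1 : p <= 1) by nra.
    assert (hp3 : 1/2 <= p) by nra.
    pose proof (alg_upper p (conj hp3 hp1)) as A.
    rewrite hp2 in A.
    assert (0 <= x^2) by nra.
    assert (B : (1 - (1 - x ^ 2 * sin t ^ 2)) ^ 2 <= (x^2)^2).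
    { replace (1 - (1 - x ^ 2 * sin t ^ 2)) with (x^2 * sin t ^ 2) by ring.
      assert (x^2 * sin t ^2 <= x^2) by nra.
      assert (0 <= x^2 * sin t ^2) by nra. nra. }
    replace (1 - (1 - x ^ 2 * sin t ^ 2)) with (x^2 * sin t ^ 2) in A by ring.
    replace (1 - (1 - x ^ 2 * sin t ^ 2)) with (x^2 * sin t ^ 2) in B by ring.
    lra.
Qed.

Lemma ln_le_sub1 (y : R) : 0 < y -> ln y <= y - 1.
Proof. intros hy. pose proof (exp_ineq1_le (ln y)). rewrite exp_ln in H by exact hy. lra. Qed.

Lemma ln_bern (w s : R) : 0 < w < 1 -> 1 <= s -> ln (1 - w) <= s * ln (1 - w / s).
Proof.
  intros hw hs.
  set (p := 1 - w / s).
  assert (hws : w / s <= w).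
  { unfold Rdiv. apply Rmult_le_reg_r with s. lra. rewrite Rmult_assoc, Rinv_l by lra. nra. }
  assert (hw0 : 0 < w / s) by (apply Rdiv_lt_0_compat; lra).
  assert (hp : 0 < p) by (unfold p; lra).
  assert (A : ln ((1 - w) / p) <= (1 - w) / p - 1) by (apply ln_le_sub1; apply Rdiv_lt_0_compat; lra).
  assert (B : ln (/ p) <= / p - 1) by (apply ln_le_sub1; apply Rinv_0_lt_compat; lra).
  unfold Rdiv in A. rewrite ln_mult in A by (try apply Rinv_0_lt_compat; lra).
  rewrite ln_Rinv in A, B by lra.
  assert (C : (s - 1) * (- ln p) <= (s - 1) * (/ p - 1)) by (apply Rmult_le_compat_l; lra).
  assert (D : (1 - w) * / p - 1 + (s - 1) * (/ p - 1) = 0).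
  { unfold p. field. split; [lra|]. intro h. assert (s - w = 0) by (unfold Rdiv in h; field_simplify in h; lra). lra. }
  nra.
Qed.

Theorem lemma2p1 (u s : R) (hu : 0 <= u <= 1) (hs : 1 <= s) :
  (forall x : R, 0 < x < 1 -> 0 < f_us u s x) <-> 2 * s * u <= 1.
Proof.
  split.
  - intros H. destruct (Rle_lt_dec (2 * s * u) 1) as [h|h]; [exact h|]. exfalso.
    set (e := (2 * s * u - 1) / 4).
    assert (he : 0 < e) by (unfold e; lra).
    set (x := Rmin (e / 4) (1 / 2)).
    assert (hx0 : 0 < x) by (unfold x; apply Rmin_glb_lt; lra).
    assert (hx1 : x <= 1/2) by apply Rmin_r.
    assert (hx2 : x <= e/4) by apply Rmin_l.
    set (z := x ^ 2).
    assert (hz0 : 0 < z) by (unfold z; apply pow_lt; lra).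
    assert (hz1 : z <= x / 2) by (unfold z; simpl; nra).
    assert (hx3 : 0 < x < 1) by lra.
    pose proof (H x hx3) as Hf.
    unfold f_us in Hf. fold z in Hf.
    assert (hz3 : x ^ 2 <= 3/4) by (unfold z in *; lra).
    pose proof (K_upper x hx0 hz3) as KU. fold z in KU.
    pose proof (K_lower x hx3) as KL.
    pose proof PI_RGT_0 as hpi.
    assert (hK : 0 < ellipticK x).
    { eapply Rlt_trans; [|exact KL]. apply Rdiv_lt_0_compat; [lra|].
      apply Rmult_lt_0_compat; [lra|]. apply sqrt_lt_R0. lra. }
    assert (huz : u * z <= z) by nra.
    assert (L1 : ln (1 - u * z) <= - (u * z)) by (assert (0 < 1 - u*z) by lra; pose proof (ln_le_sub1 (1 - u*z) H0); lra).
    assert (L2 : - ln (PI / (2 * ellipticK x)) <= z / 4 + 2 * z ^ 2).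
    { rewrite <- ln_Rinv by (apply Rdiv_lt_0_compat; lra).
      replace (/ (PI / (2 * ellipticK x))) with (2 * ellipticK x / PI) by (field; lra).
      assert (hh : 0 < 2 * ellipticK x / PI) by (apply Rdiv_lt_0_compat; lra).
      pose proof (ln_le_sub1 _ hh).
      assert (2 * ellipticK x / PI <= 1 + z / 4 + 2 * z ^ 2).
      { apply Rmult_le_reg_r with PI. lra.
        replace (2 * ellipticK x / PI * PI) with (2 * ellipticK x) by (field; lra).
        replace (z ^ 2) with ((x^2)^2) by reflexivity. unfold z in *. lra. }
      lra. }
    assert (L3 : s / 2 * ln (1 - u * z) <= s / 2 * (- (u * z))) by (apply Rmult_le_compat_l; lra).
    assert (0 < - (s / 2 * (u * z)) + z / 4 + 2 * z ^ 2) by lra.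
    assert (E : - (s / 2 * (u * z)) + z / 4 + 2 * z ^ 2 = z * (2 * z - e)) by (unfold e; field).
    rewrite E in H0.
    assert (2 * z - e < 0) by lra.
    assert (z * (2 * z - e) < 0) by nra.
    lra.
  - intros h x hx. unfold f_us.
    set (z := x ^ 2).
    assert (h2 : 0 < z < 1) by (unfold z; destruct hx; split; [nra| ]; assert (x*x < x*1) by (apply Rmult_lt_compat_l; lra); simpl; lra).
    pose proof (K_lower x hx) as KL. fold z in KL.
    set (q := sqrt (1 - z / 2)) in KL.
    assert (hq2 : q ^ 2 = 1 - z / 2) by (apply pow2_sqrt; lra).
    assert (hq0 : 0 < q) by (apply sqrt_lt_R0; lra).
    pose proof PI_RGT_0 as hpi.
    assert (hK : PI < 2 * ellipticK x * q).
    { apply Rmult_lt_reg_r with (/ (2 * q)). apply Rinv_0_lt_compat; lra.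
      replace (2 * ellipticK x * q * / (2 * q)) with (ellipticK x) by (field; lra). exact KL. }
    assert (hK0 : 0 < ellipticK x) by nra.
    assert (L1 : ln (PI / (2 * ellipticK x)) < ln q).
    { apply ln_increasing. apply Rdiv_lt_0_compat; lra.
      apply Rmult_lt_reg_r with (2 * ellipticK x). lra.
      replace (PI / (2 * ellipticK x) * (2 * ellipticK x)) with PI by (field; lra). lra. }
    assert (L2 : ln q = ln (1 - z / 2) / 2).
    { rewrite <- hq2. simpl. rewrite Rmult_1_r, ln_mult by lra. field. }
    assert (L3 : ln (1 - z / 2) <= s * ln (1 - z / 2 / s)) by (apply ln_bern; lra).
    assert (hu' : u * z <= z / 2 / s).
    { apply Rmult_le_reg_r with (2 * s). lra.
      replace (z / 2 / s * (2 * s)) with z by (field; lra). nra. }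
    assert (hzs : z / 2 / s <= z / 2).
    { apply Rmult_le_reg_r with s. lra. replace (z / 2 / s * s) with (z/2) by (field; lra). nra. }
    assert (L4 : ln (1 - z / 2 / s) <= ln (1 - u * z)) by (apply ln_le; lra).
    assert (L5 : s * ln (1 - z / 2 / s) <= s * ln (1 - u * z)) by (apply Rmult_le_compat_l; lra).
    lra.
Qed.
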